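(* Let $G$ be an $n$-vertex graph with average degree $d>0$. Then there exist real numbers $D_1,D_2\geq d/4$ and a non-empty bipartite subgraph $G'$ of $G$ with parts $X_1$ and $X_2$ such that for every $x\in X_1$ we have $d_{G'}(x)\geq \frac{D_1}{256(\log n)^2}$ and $d_G(x)\leq D_1$, and for every $x\in X_2$ we have $d_{G'}(x)\geq \frac{D_2}{256(\log n)^2}$ and $d_G(x)\leq D_2$.
   Context: $d_F(x)$ denotes the degree of $x$ in the graph $F$; $\log$ is the natural logarithm. *)

(* Defs.v *)
From HB Require Import structures.
From mathcomp Require Import all_boot all_order all_algebra.
From mathcomp Require Import all_classical all_reals all_analysis.
Set Implicit Arguments. Unset Strict Implicit. Unset Printing Implicit Defensive.
Import Order.TTheory GRing.Theory Num.Theory.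
Local Open Scope ring_scope.

Definition simple_graph (T : finType) (e : rel T) : Prop :=
  symmetric e /\ irreflexive e.

Definition deg (T : finType) (e : rel T) (x : T) : nat := #|[set y | e x y]|.

Definition avg_deg (R : realType) (T : finType) (e : rel T) : R :=
  (\sum_(x : T) (deg e x)%:R) / #|T|%:R.

Definition bipartite_subgraph (T : finType) (e F : rel T) (X1 X2 : {set T})
  : Prop :=
  [/\ symmetric F, subrel F e, [disjoint X1 & X2] &
      forall x y, F x y -> (x \in X1 /\ y \in X2) \/ (x \in X2 /\ y \in X1)].

(* Main.v *)
Require Import Defs.
From HB Require Import structures.
From mathcomp Require Import all_boot all_order all_algebra.
From mathcomp Require Import all_classical all_reals all_analysis.
From mathcomp Require Import lra zify ring.
Import Order.TTheory GRing.Theory Num.Theory.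
Local Open Scope ring_scope.


Lemma card_sum (T : finType) (b : pred T) :
  #|[set y | b y]| = (\sum_y (b y : nat))%N.
Proof.
rewrite -sum1dep_card big_mkcond /=; apply: eq_bigr => y _; by case: (b y).
Qed.

Lemma dcount (T : finType) (r : rel T) (P Q : pred T) : symmetric r ->
  (\sum_(x | P x) #|[set y | r x y && Q y]| =
   \sum_(x | Q x) #|[set y | r x y && P y]|)%N.
Proof.
move=> sr.
have E : forall P Q : pred T, (\sum_(x | P x) #|[set y | r x y && Q y]| =
   \sum_x \sum_y ((P x && r x y && Q y) : nat))%N.
  move=> P' Q'; rewrite big_mkcond; apply: eq_bigr => x _; rewrite card_sum.
  case: (P' x) => //=; by rewrite big1.
rewrite !E exchange_big; apply: eq_bigr => x _; apply: eq_bigr => y _.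
by rewrite sr; case: (P y); case: (Q x); case: (r x y).
Qed.

Definition degin {T : finType} (B : rel T) (W : {set T}) x :=
  #|[set y in W | B x y]|.
Definition Ein {T : finType} (B : rel T) (W : {set T}) :=
  (\sum_(x in W) degin B W x)%N.

Lemma Ein_del (T : finType) (B : rel T) (W : {set T}) x :
  symmetric B -> irreflexive B -> x \in W ->
  Ein B W = (Ein B (W :\ x) + 2 * degin B W x)%N.
Proof.
move=> sB iB Wx.
rewrite /Ein (bigD1 x Wx) /=.
have E1 : forall y, y != x -> degin B W y = (degin B (W :\ x) y + B y x)%N.
  move=> y yx; rewrite /degin (cardsD1 x) inE Wx /= addnC; congr (_ + _)%N.
  apply: eq_card => z; rewrite !inE; by case: (z == x).
rewrite (eq_bigr (fun y => degin B (W :\ x) y + B y x)%N); last first.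
  by move=> y /andP[_ yx]; rewrite E1.
rewrite big_split /=.
have E2 : (\sum_(i in W | i != x) (B i x : nat))%N = degin B W x.
  rewrite /degin card_sum big_mkcond [RHS]big_mkcond /=.
  apply: eq_bigr => y _.
  case: (eqVneq y x) => [->|yx]; first by rewrite iB andbF; case: (x \in W).
  by rewrite /= andbT sB; case: (y \in W).
rewrite E2; under [X in _ = (X + _)%N]eq_bigl => i do rewrite in_setD1 andbC.
by rewrite addnC -addnA addnn mul2n.
Qed.

Lemma aux_del (R : realType) (a s e g : R) :
  (a + s) *+ 2 < e + 2 * g -> g < a -> s *+ 2 < e.
Proof. rewrite !mulr2n => H1 H2. lra. Qed.

Lemma deletion (R : realType) (T : finType) (B : rel T) (t : T -> R) :
  symmetric B -> irreflexive B -> forall W : {set T},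
  (\sum_(x in W) t x) *+ 2 < (Ein B W)%:R ->
  exists W' : {set T}, [/\ W' \subset W, (0 < #|W'|)%N &
     forall x, x \in W' -> t x <= (degin B W' x)%:R].
Proof.
move=> sB iB W.
have [n] := ubnP #|W|; elim: n W => // n IH W ltW H.
case: (boolP [exists x in W, (degin B W x)%:R < t x]).
  case/existsP => x /andP[Wx Hx].
  have Hc : (#|W :\ x| < n)%N.
    by move: ltW; rewrite (cardsD1 x W) Wx.
  have [|W' [s1 s2 s3]] := IH (W :\ x) Hc.
    have St : \sum_(i in W) t i = t x + \sum_(i in W :\ x) t i.
      by rewrite (bigD1 x Wx); congr (_ + _); apply: eq_bigl => y; rewrite in_setD1 andbC.
    move: H; rewrite (@Ein_del _ _ _ _ sB iB Wx) St.
    rewrite natrD natrM => H.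
    move: H Hx; rewrite !mulr2n => H Hx; lra.
  exists W'; split => //; apply/fintype.subsetP => y /(fintype.subsetP s1); rewrite inE => /andP[_ H']; exact: H'.
move=> Hn; exists W; split => //.
  rewrite lt0n cards_eq0; apply/negP => /eqP W0; move: H; rewrite /Ein W0 !big_set0 mulr0n.
  by rewrite mul0rn ltxx.
move=> x Wx; rewrite leNgt; apply/negP => Hx; move/negP: Hn; apply.
by apply/existsP; exists x; rewrite Wx.
Qed.

Lemma card_sumS (T : finType) (A : {set T}) :
  #|A| = (\sum_y ((y \in A) : nat))%N.
Proof.
rewrite -sum1_card big_mkcond /=; apply: eq_bigr => y _; by case: (y \in A).
Qed.



Definition cross {T : finType} (G : rel T) (S : {set T}) x :=
  #|[set y | G x y && ((x \in S) != (y \in S))]|.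
Definition same {T : finType} (G : rel T) (S : {set T}) x :=
  #|[set y | G x y && ((x \in S) == (y \in S))]|.
Definition cut {T : finType} (G : rel T) (S : {set T}) :=
  (\sum_x cross G S x)%N.

Lemma deg_split (T : finType) (G : rel T) S x :
  deg G x = (cross G S x + same G S x)%N.
Proof.
rewrite /deg /cross /same !card_sumS -big_split /=; apply: eq_bigr => y _; rewrite !inE.
by case: (G x y); case: (x \in S); case: (y \in S).
Qed.

Lemma flip_cut (T : finType) (G : rel T) (S : {set T}) x :
  symmetric G -> irreflexive G ->
  (cut G [set z | (z \in S) (+) (z == x)] + 2 * cross G S x =
   cut G S + 2 * same G S x)%N.
Proof.
move=> sG iG; set S' := [set z | (z \in S) (+) (z == x)].
have inS' : forall z, (z \in S') = (z \in S) (+) (z == x) by move=> z; rewrite inE.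
have Ex : cross G S' x = same G S x.
  rewrite /cross /same; apply: eq_card => y; rewrite !inE.
  case: (eqVneq y x) => [->|yx]; first by rewrite iG.
  by rewrite eqxx /=; case: (x \in S); case: (y \in S).
have Ey : forall y, y != x -> (cross G S' y + (G y x && ((y \in S) != (x \in S))) =
   cross G S y + (G y x && ((y \in S) == (x \in S))))%N.
  move=> y yx; rewrite /cross (cardsD1 x) [X in _ = (X + _)%N](cardsD1 x) !inE.
  rewrite (negbTE yx) eqxx addbF addbT.
  have -> : #|[set y0 | G y y0 & (y \in S) != (y0 \in S')] :\ x| =
            #|[set y0 | G y y0 & (y \in S) != (y0 \in S)] :\ x|.
    apply: eq_card => z; rewrite !inE.
    by case: (eqVneq z x) => [->|zx] //=; rewrite addbF.
  case: (G y x); case: (y \in S); case: (x \in S) => /=; lia.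
have Ea : (\sum_(y | y != x) (G y x && ((y \in S) != (x \in S)) : nat))%N = cross G S x.
  rewrite /cross card_sumS [RHS](bigD1 x) //= inE iG add0n; apply: eq_bigr => y _; rewrite inE.
  by rewrite sG; case: (x \in S); case: (y \in S).
have Eb : (\sum_(y | y != x) (G y x && ((y \in S) == (x \in S)) : nat))%N = same G S x.
  rewrite /same card_sumS [RHS](bigD1 x) //= inE iG add0n; apply: eq_bigr => y _; rewrite inE.
  by rewrite sG; case: (x \in S); case: (y \in S).
rewrite /cut (bigD1 x) //= [X in (_ = X + _)%N](bigD1 x) //= Ex.
have H : (\sum_(y | y != x) (cross G S' y + (G y x && ((y \in S) != (x \in S)) : nat)) =
   \sum_(y | y != x) (cross G S y + (G y x && ((y \in S) == (x \in S)) : nat)))%N.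
  by apply: eq_bigr.
rewrite !big_split /= Ea Eb in H.
lia.
Qed.

Lemma maxcut (T : finType) (G : rel T) : symmetric G -> irreflexive G ->
  exists S : {set T}, forall x, (deg G x <= 2 * cross G S x)%N.
Proof.
move=> sG iG.
have [S _ Smax] := @arg_maxnP _ [set: T] predT (cut G) isT.
exists S => x; rewrite leqNgt; apply/negP => Hlt.
have := @flip_cut _ G S x sG iG.
have := Smax [set z | (z \in S) (+) (z == x)] isT.
rewrite (@deg_split _ G S x) in Hlt.
lia.
Qed.



Lemma sum_card_ind (T : finType) (P : pred T) (r : rel T) :
  (\sum_(x | P x) #|[set y | r x y]| = \sum_x \sum_y ((P x && r x y) : nat))%N.
Proof.
rewrite big_mkcond; apply: eq_bigr => x _; rewrite card_sumS.
case: (P x) => /=; last by rewrite big1.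
by apply: eq_bigr => y _; rewrite inE.
Qed.

Lemma deg_lt (T : finType) (e : rel T) x : irreflexive e -> (deg e x < #|T|)%N.
Proof.
move=> ie; rewrite /deg -cardsT (cardsD1 x [set: T]) inE add1n ltnS.
apply: subset_leq_card; apply/fintype.subsetP => y; rewrite !inE => exy.
by rewrite andbT; apply/negP => /eqP yx; move: exy; rewrite yx ie.
Qed.

Lemma ln2_ge (R : realType) : 1 / 2 <= ln (2 : R).
Proof.
have h := @le_ln1Dx R (- (1/2)).
have h2 : -1 < - (1 / 2) :> R by lra.
have := h h2.
have -> : 1 + - (1 / 2) = (2 : R)^-1 by field.
rewrite lnV ?posrE //; lra.
Qed.

Lemma log_bound (R : realType) (n k : nat) : (2 <= n)%N -> (2 ^ k < n)%N ->
  (k.+1)%:R < 4 * ln (n%:R : R).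
Proof.
move=> n2 kn.
have l2 := @ln2_ge R.
have h1 : ln (2 : R) <= ln (n%:R).
  rewrite ler_ln ?posrE ?ler_nat //; last by rewrite ltr0n; lia.
have h2 : ln ((2 : R) ^+ k) < ln (n%:R).
  rewrite ltr_ln ?posrE ?exprn_gt0 //; last by rewrite ltr0n; lia.
  by rewrite -natrX ltr_nat.
rewrite lnXn // in h2.
have h3 : k%:R * (1/2) <= ln (2:R) *+ k.
  by rewrite -[ln 2 *+ k]mulr_natl; apply: ler_wpM2l; [rewrite ler0n | exact: l2].
rewrite -natr1; lra.
Qed.



Theorem lemma2p3 (R : realType) (T : finType) (e : rel T) (d : R) :
  simple_graph e -> d = avg_deg R e -> 0 < d ->
  exists D1 D2 : R, d / 4 <= D1 /\ d / 4 <= D2 /\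
    exists (F : rel T) (X1 X2 : {set T}),
      [/\ bipartite_subgraph e F X1 X2,
          (0 < #|X1 :|: X2|)%N,
          (forall x, x \in X1 ->
             D1 / (256 * (ln (#|T|%:R : R)) ^+ 2) <= (deg F x)%:R
             /\ (deg e x)%:R <= D1) &
          (forall x, x \in X2 ->
             D2 / (256 * (ln (#|T|%:R : R)) ^+ 2) <= (deg F x)%:R
             /\ (deg e x)%:R <= D2)].
Proof.
move=> [se ie] hd d0.
set n := #|T|.
have n0 : (0 < n)%N.
  rewrite lt0n; apply/negP => /eqP n0; move: d0; rewrite hd /avg_deg.
  by rewrite -/n n0 invr0 mulr0 ltxx.
have sumdeg : \sum_x ((deg e x)%:R : R) = d * n%:R.
  by rewrite hd /avg_deg -/n mulfVK // pnatr_eq0 -lt0n.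
have [x0 dx0] : exists x0, (0 < deg e x0)%N.
  case: (boolP [exists x, (0 < deg e x)%N]) => [/existsP//|].
  rewrite negb_exists => /forallP H.
  move: sumdeg; rewrite big1 => [H0|x _]; last by move: (H x); rewrite -leqNgt leqn0 => /eqP ->.
  have : 0 < d * n%:R by rewrite mulr_gt0 // ltr0n.
  by rewrite -H0 ltxx.
have n2 : (2 <= n)%N by have := @deg_lt _ e x0 ie; lia.
set k := trunc_log 2 n.-1.
have lgk : forall x, (trunc_log 2 (deg e x) <= k)%N.
  move=> x; apply: leq_trunc_log; have := @deg_lt _ e x ie; lia.
have k2 : (2 ^ k < n)%N.
  have := @trunc_logP 2 n.-1 isT; rewrite -/k; lia.
pose Dx x : R := (2 ^ (trunc_log 2 (deg e x)).+1)%:R.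
have degD : forall x, (deg e x)%:R < Dx x.
  by move=> x; rewrite ltr_nat trunc_log_ltn.
have Ddeg : forall x, (0 < deg e x)%N -> Dx x <= 2 * (deg e x)%:R.
  move=> x hx; rewrite /Dx expnS natrM ler_wpM2l // ler_nat.
  exact: trunc_logP.
pose good x := (0 < deg e x)%N && (d / 4 <= Dx x).
have badle : forall x, ~~ good x -> (deg e x)%:R <= d / 4.
  move=> x; rewrite negb_and -leqNgt leqn0 -ltNge => /orP[/eqP->|h].
    by apply: divr_ge0; [exact: ltW | ].
  exact: (le_trans (ltW (degD x)) (ltW h)).
pose G0 x y := [&& e x y, good x & good y].
have sG0 : symmetric G0.
  by move=> x y; rewrite /G0 se; case: (good x); case: (good y); rewrite ?andbF.
have iG0 : irreflexive G0 by move=> x; rewrite /G0 ie.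
have step1 : forall x, (deg e x <= deg G0 x + (~~ good x) * deg e x
                          + #|[set y | e x y && ~~ good y]|)%N.
  move=> x; rewrite /deg !card_sumS big_distrr /= -!big_split /=.
  apply: leq_sum => y _; rewrite !inE /G0.
  by case: (e x y); case: (good x); case: (good y).
have step2 : (\sum_x deg e x <= \sum_x deg G0 x + 2 * \sum_(x | ~~ good x) deg e x)%N.
  have E1 : (\sum_x #|[set y | e x y && ~~ good y]| = \sum_(x | ~~ good x) deg e x)%N.
    rewrite (@dcount _ e xpredT (fun y => ~~ good y) se); apply: eq_bigr => x _.
    by apply: eq_card => y; rewrite !inE andbT.
  have E2 : (\sum_x (~~ good x) * deg e x = \sum_(x | ~~ good x) deg e x)%N.
    by rewrite [RHS]big_mkcond; apply: eq_bigr => x _; case: (good x) => /=; rewrite ?mul0n ?mul1n.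
  have H1 : (\sum_x deg e x <= \sum_x (deg G0 x + (~~ good x) * deg e x
                          + #|[set y | e x y && ~~ good y]|))%N.
    by apply: leq_sum => x _; exact: step1.
  apply: (leq_trans H1).
  by rewrite !big_split /= E1 E2 -addnA addnn mul2n.
have sumG0 : d * n%:R / 2 <= \sum_x ((deg G0 x)%:R : R).
  move: step2; rewrite -(ler_nat R) natrD natrM !natr_sum => H.
  have Hb : \sum_(x | ~~ good x) ((deg e x)%:R : R) <= n%:R * (d / 4).
    rewrite big_mkcond /=.
    apply: (@le_trans _ _ (\sum_(x : T) (d / 4))).
      apply: ler_sum => x _; case: (boolP (good x)) => /= h.
        by apply: divr_ge0; [exact: ltW | ].
      exact: badle.
    by rewrite sumr_const -/n mulr_natl.
  rewrite sumdeg in H; lra.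
have [S0 HS0] := @maxcut _ G0 sG0 iG0.
have sumcross : d * n%:R / 4 <= \sum_x ((cross G0 S0 x)%:R : R).
  have : \sum_x ((deg G0 x)%:R : R) <= \sum_x (2 * (cross G0 S0 x)%:R).
    by apply: ler_sum => x _; rewrite -natrM ler_nat.
  rewrite -mulr_sumr; lra.
have crossC : forall x, cross G0 (~: S0) x = cross G0 S0 x.
  move=> x; rewrite /cross; apply: eq_card => y; rewrite !inE.
  by case: (x \in S0); case: (y \in S0).
have [S HS] : exists S : {set T},
    d * n%:R / 8 <= \sum_(x in S) ((cross G0 S x)%:R : R).
  rewrite (bigID (fun x => x \in S0)) /= in sumcross.
  case: (lerP (d * n%:R / 8) (\sum_(x in S0) ((cross G0 S0 x)%:R : R))) => h.
    by exists S0.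
  exists (~: S0).
  have -> : \sum_(x in ~: S0) ((cross G0 (~: S0) x)%:R : R) =
            \sum_(x | x \notin S0) ((cross G0 S0 x)%:R : R).
    by apply: eq_big => x; [rewrite inE | move=> _; rewrite crossC].
  lra.
pose H x y := G0 x y && ((x \in S) != (y \in S)).
have sH : symmetric H.
  by move=> x y; rewrite /H sG0; case: (x \in S); case: (y \in S).
have iH : irreflexive H by move=> x; rewrite /H iG0.
pose lvl x : 'I_k.+1 := inord (trunc_log 2 (deg e x)).
have lvlE : forall x, val (lvl x) = trunc_log 2 (deg e x).
  by move=> x; rewrite /lvl /= inordK // ltnS lgk.
pose P (i : 'I_k.+1) x := [&& x \in S, lvl x == i & good x].
pose Q (j : 'I_k.+1) x := [&& x \notin S, lvl x == j & good x].
pose ee (p : 'I_k.+1 * 'I_k.+1) :=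
  (\sum_(x | P p.1 x) #|[set y | H x y && Q p.2 y]|)%N.
have sumee : (\sum_(x in S) cross G0 S x = \sum_p ee p)%N.
  have E : forall p, ee p = (\sum_x \sum_y ((P p.1 x && (H x y && Q p.2 y)) : nat))%N.
    by move=> p; rewrite /ee (@sum_card_ind _ (P p.1) (fun x y => H x y && Q p.2 y)).
  rewrite (eq_bigr _ (fun p _ => E p)).
  rewrite (@sum_card_ind _ (fun x => x \in S) (fun x y => H x y)).
  rewrite [RHS]exchange_big; apply: eq_bigr => x _; rewrite [RHS]exchange_big; apply: eq_bigr => y _.
  case: (boolP ((x \in S) && H x y)) => h.
    move: (h) => /andP[xS hH]; move: (hH); rewrite /H /G0 => /andP[/and3P[exy gx gy] xy].
    have yS : (y \in S) = false by move: xy; rewrite xS; case: (y \in S).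
    rewrite (bigD1 (lvl x, lvl y)) //= big1 => [|p hp].
      by rewrite /P /Q xS yS exy gx gy !eqxx.
    apply/eqP; rewrite eqb0; apply: contra hp; case: p => a b /=.
    by move=> /andP[/and3P[_ /eqP <- _] /andP[_ /and3P[_ /eqP <- _]]].
  rewrite big1 => [//|p _].
  apply/eqP; rewrite eqb0; apply: contra h.
  by move=> /andP[/and3P[xS _ _] /andP[hH _]]; rewrite xS hH.
have [pm _ pmax] := @arg_maxnP _ (ord0, ord0) predT ee isT.
have hpig : d * n%:R / 8 <= (k.+1 * k.+1)%:R * ((ee pm)%:R : R).
  have h1 : (\sum_p ee p <= (k.+1 * k.+1) * ee pm)%N.
    have h2 : (\sum_p ee p <= \sum_(p : 'I_k.+1 * 'I_k.+1) ee pm)%N.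
      by apply: leq_sum => p _; exact: pmax.
    by apply: (leq_trans h2); rewrite sum_nat_const card_prod !card_ord.
  apply: (le_trans HS); rewrite -natrM -natr_sum ler_nat sumee //.
pose W0 : {set T} := [set x | P pm.1 x || Q pm.2 x].
pose c : R := 256 * (ln (n%:R : R)) ^+ 2.
pose t x := Dx x / c.
have EinW0 : Ein H W0 = (2 * ee pm)%N.
  rewrite /Ein /degin (@sum_card_ind _ (fun x => x \in W0) (fun x y => (y \in W0) && H x y)).
  rewrite mul2n -addnn {2}/ee (@dcount _ H (P pm.1) (Q pm.2) sH) /ee.
  rewrite (@sum_card_ind _ (P pm.1) (fun x y => H x y && Q pm.2 y)).
  rewrite (@sum_card_ind _ (Q pm.2) (fun x y => H x y && P pm.1 y)).
  rewrite -big_split; apply: eq_bigr => x _; rewrite -big_split; apply: eq_bigr => y _.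
  rewrite /W0 !inE /P /Q /H /G0.
  case: (x \in S); case: (y \in S); rewrite /= ?andbF ?andbT ?orbF //=;
  case: (lvl x == pm.1); case: (lvl x == pm.2); case: (lvl y == pm.1); case: (lvl y == pm.2);
  by case: (good x); case: (good y); case: (e x y).
have W0good : forall x, x \in W0 -> good x.
  by move=> x; rewrite inE /P /Q => /orP[/and3P[_ _ ->]|/and3P[_ _ ->]].
have lnpos : 0 < ln (n%:R : R) by apply: ln_gt0; rewrite ltr1n.
have cpos : 0 < c by rewrite /c mulr_gt0 // exprn_gt0.
have hb := @log_bound R n k n2 k2.
have cK : 16 * ((k.+1)%:R * (k.+1)%:R) < c.
  rewrite /c; have hK : (0 : R) <= (k.+1)%:R by rewrite ler0n.
  rewrite expr2; nra.
have nd0 : 0 < d * n%:R by rewrite mulr_gt0 // ltr0n.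
have sumt : \sum_(x in W0) t x <= 2 * (d * n%:R) / c.
  rewrite /t -mulr_suml; apply: ler_wpM2r; first by rewrite invr_ge0 ltW.
  apply: (@le_trans _ _ (\sum_(x in W0) (2 * ((deg e x)%:R : R)))).
    apply: ler_sum => x hx; apply: Ddeg.
    by have := W0good x hx; case/andP.
  rewrite -mulr_sumr -sumdeg ler_wpM2l // big_mkcond /=.
  apply: ler_sum => x _; case: (x \in W0) => //; exact: ler0n.
have key : (\sum_(x in W0) t x) *+ 2 < (Ein H W0)%:R.
  rewrite EinW0 natrM; rewrite natrM in hpig.
  set E := ((ee pm)%:R : R) in hpig *.
  set K := ((k.+1)%:R : R) in hpig cK.
  have hE : 0 < E.
    rewrite lt0r; apply/andP; split; last by rewrite /E ler0n.
    apply/negP => /eqP h0; move: hpig; rewrite h0 mulr0; lra.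
  have h16 : 2 * (d * n%:R) < c * E by nra.
  have h17 : 2 * (d * n%:R) / c < E by rewrite ltr_pdivrMr // [E * c]mulrC.
  rewrite mulr2n; lra.
have [W [sW W0pos hW]] := @deletion R T H t sH iH W0 key.
pose F x y := [&& H x y, x \in W & y \in W].
pose X1 : {set T} := [set x in W | x \in S].
pose X2 : {set T} := [set x in W | x \notin S].
pose D1 : R := Num.max ((2 ^ (val pm.1).+1)%:R) (d / 4).
pose D2 : R := Num.max ((2 ^ (val pm.2).+1)%:R) (d / 4).
have degF : forall x, x \in W -> deg F x = degin H W x.
  move=> x xW; rewrite /deg /degin; apply: eq_card => y; rewrite !inE /F xW /=.
  by rewrite andbC.
exists D1, D2; split; first by rewrite le_max lexx orbT.
split; first by rewrite le_max lexx orbT.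
exists F, X1, X2; split.
- split.
  + by move=> x y; rewrite /F sH; case: (x \in W); case: (y \in W); rewrite ?andbF.
  + by move=> x y /and3P[/andP[/and3P[exy _ _] _] _ _].
  + rewrite -setI_eq0; apply/eqP/setP => z; rewrite !inE.
    by case: (z \in S); rewrite ?andbF.
  + move=> x y /and3P[/andP[_ xy] xW yW]; rewrite /X1 /X2 !inE xW yW /=.
    by move: xy; case: (x \in S); case: (y \in S) => //= _; [left | right].
- have -> : X1 :|: X2 = W.
    by apply/setP => z; rewrite !inE; case: (z \in W); case: (z \in S).
  exact: W0pos.
- move=> x; rewrite inE => /andP[xW xS].
  have := fintype.subsetP sW x xW; rewrite inE /P /Q xS /= orbF.
  move=> /andP[lx gx].
  have DxE : Dx x = (2 ^ (val pm.1).+1)%:R by rewrite /Dx -(eqP lx) lvlE.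
  have D1E : D1 = Dx x.
    rewrite /D1 -DxE; apply/max_idPl; by case/andP: gx.
  rewrite D1E degF //; split; last exact: ltW (degD x).
  exact: hW x xW.
- move=> x; rewrite inE => /andP[xW xS].
  have := fintype.subsetP sW x xW; rewrite inE /P /Q (negbTE xS) /=.
  move=> /andP[lx gx].
  have DxE : Dx x = (2 ^ (val pm.2).+1)%:R by rewrite /Dx -(eqP lx) lvlE.
  have D2E : D2 = Dx x.
    rewrite /D2 -DxE; apply/max_idPl; by case/andP: gx.
  rewrite D2E degF //; split; last exact: ltW (degD x).
  exact: hW x xW.
Qed.
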